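(* Let $(E,\rho)$ be a complete partial $b_v(s)$ metric space and let $S:E\to E$ satisfy $\rho(Su,Sw)\le\lambda\rho(u,w)$ for all $u,w\in E$, where $\lambda\in[0,1)$. Then $S$ has a unique fixed point $b\in E$, and $\rho(b,b)=0$.
   Context: Let $E$ be a nonempty set and $v\in\mathbb{N}$. $(E,\rho)$, with $\rho:E\times E\to[0,\infty)$, is a partial $b_v(s)$ metric space if there is a real $s\ge1$ such that for all $u,w,z_1,\dots,z_v\in E$: (1) $u=w$ iff $\rho(u,u)=\rho(u,w)=\rho(w,w)$; (2) $\rho(u,u)\le\rho(u,w)$; (3) $\rho(u,w)=\rho(w,u)$; (4) $\rho(u,w)\le s[\rho(u,z_1)+\rho(z_1,z_2)+\dots+\rho(z_{v-1},z_v)+\rho(z_v,w)]-\sum_{i=1}^v\rho(z_i,z_i)$. A sequence $\{u_n\}$ in $E$ converges to $u\in E$ if $\lim_{n\to\infty}\rho(u_n,u)=\rho(u,u)$; it is Cauchy if $\lim_{n,m\to\infty}\rho(u_n,u_m)$ exists and is finite. $(E,\rho)$ is complete if for every Cauchy sequence $\{u_n\}$ there is $u\in E$ with $\lim_{n,m\to\infty}\rho(u_n,u_m)=\lim_{n\to\infty}\rho(u_n,u)=\rho(u,u)$. *)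

(* Defs.v *)
From Stdlib Require Import Reals Lra.
Open Scope R_scope.

Fixpoint chain_sum {E : Type} (rho : E -> E -> R) (z : nat -> E) (k : nat) : R :=
  match k with
  | O => 0
  | S k' => chain_sum rho z k' + rho (z k) (z (S k))
  end.

Fixpoint diag_sum {E : Type} (rho : E -> E -> R) (z : nat -> E) (k : nat) : R :=
  match k with
  | O => 0
  | S k' => diag_sum rho z k' + rho (z k) (z k)
  end.

(* Partial b_v(s) metric space; v in N is taken to be >= 1; the points
   z_1..z_v are given by z : nat -> E (only indices 1..v matter). *)
Definition partial_bv_metric {E : Type} (v : nat) (s : R) (rho : E -> E -> R) : Prop :=
  (1 <= v)%nat /\ 1 <= s /\
  (forall u w, 0 <= rho u w) /\
  (forall u w, u = w <-> (rho u u = rho u w /\ rho u w = rho w w)) /\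
  (forall u w, rho u u <= rho u w) /\
  (forall u w, rho u w = rho w u) /\
  (forall (u w : E) (z : nat -> E),
      rho u w <= s * (rho u (z 1%nat) + chain_sum rho z (v - 1) + rho (z v) w)
                 - diag_sum rho z v).

Definition double_limit (f : nat -> nat -> R) (L : R) : Prop :=
  forall eps, eps > 0 -> exists N, forall n m, (n >= N)%nat -> (m >= N)%nat ->
    Rabs (f n m - L) < eps.

Definition pb_cauchy {E : Type} (rho : E -> E -> R) (u : nat -> E) : Prop :=
  exists L, double_limit (fun n m => rho (u n) (u m)) L.

Definition pb_complete {E : Type} (rho : E -> E -> R) : Prop :=
  forall u : nat -> E, pb_cauchy rho u ->
    exists x : E,
      double_limit (fun n m => rho (u n) (u m)) (rho x x) /\
      Un_cv (fun n => rho (u n) x) (rho x x).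

(* Main.v *)
Require Import Defs.
From Stdlib Require Import Reals.
From Stdlib Require Import Lra Lia Psatz Arith.
Open Scope R_scope.

Lemma chain_const {E : Type} (rho : E -> E -> R) (x : E) k :
  chain_sum rho (fun _ => x) k = INR k * rho x x.
Proof. induction k; simpl chain_sum; [simpl; ring|rewrite IHk, S_INR; ring]. Qed.

Lemma diag_const {E : Type} (rho : E -> E -> R) (x : E) k :
  diag_sum rho (fun _ => x) k = INR k * rho x x.
Proof. induction k; simpl diag_sum; [simpl; ring|rewrite IHk, S_INR; ring]. Qed.

Lemma qtri {E : Type} v s (rho : E -> E -> R) (Hmet : partial_bv_metric v s rho) :
  forall u x w, rho u w <= s * (1 + INR (v - 1)) * (rho u x + rho x w).
Proof.
  destruct Hmet as [Hv [Hs [Hpos [Heq [Hdiag [Hsym Htri]]]]]].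
  intros u x w. pose proof (Htri u w (fun _ => x)) as H. simpl in H.
  rewrite chain_const, diag_const in H.
  pose proof (Hdiag x w). pose proof (Hpos u x). pose proof (Hpos x x).
  pose proof (pos_INR (v-1)). pose proof (pos_INR v).
  assert (0 <= s * INR (v-1) * (rho x w - rho x x)) by
    (apply Rmult_le_pos; [apply Rmult_le_pos; lra|lra]).
  assert (0 <= s * INR (v-1) * rho u x) by
    (apply Rmult_le_pos; [apply Rmult_le_pos; lra|lra]).
  assert (0 <= INR v * rho x x) by (apply Rmult_le_pos; lra).
  nra.
Qed.

Lemma le_eps (a : R) : (forall eps, eps > 0 -> a <= eps) -> a <= 0.
Proof.
  intros H. destruct (Rle_dec a 0); auto. specialize (H (a/2)). lra.
Qed.

Lemma sum_ge (D : nat -> R) (Hp : forall j, 0 <= D j) :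
  forall k j, (j <= k)%nat -> D j <= sum_f_R0 D k.
Proof.
  induction k; intros j Hj.
  - replace j with 0%nat by lia. simpl. lra.
  - simpl. destruct (Nat.eq_dec j (S k)).
    + subst. assert (0 <= sum_f_R0 D k).
      { clear -Hp. induction k; simpl; [apply Hp| pose proof (Hp (S k)); lra]. }
      lra.
    + pose proof (IHk j ltac:(lia)). pose proof (Hp (S k)). lra.
Qed.

Theorem mainTheorem2 (E : Type) (e0 : E) (v : nat) (s : R) (rho : E -> E -> R)
  (Hmet : partial_bv_metric v s rho) (Hcomp : pb_complete rho)
  (S : E -> E) (lam : R) (Hlam0 : 0 <= lam) (Hlam1 : lam < 1)
  (Hcontr : forall u w, rho (S u) (S w) <= lam * rho u w) :
  exists b : E, S b = b /\ rho b b = 0 /\ (forall c : E, S c = c -> c = b).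
Proof.
  pose proof (qtri v s rho Hmet) as Hq.
  set (t := s * (1 + INR (v - 1))) in Hq.
  destruct Hmet as [Hv [Hs [Hpos [Heq [Hdiag [Hsym Htri]]]]]].
  assert (Ht : 1 <= t).
  { unfold t. pose proof (pos_INR (v-1)). nra. }
  set (u := fun n => Nat.iter n S e0).
  assert (Hit : forall n a b, rho (u (n + a)%nat) (u (n + b)%nat) <= lam ^ n * rho (u a) (u b)).
  { induction n; intros a b.
    - simpl. lra.
    - simpl. unfold u in *. simpl.
      eapply Rle_trans; [apply Hcontr|]. specialize (IHn a b).
      pose proof (pow_le lam n Hlam0). nra. }
  assert (Hpow : forall y, 0 < y -> exists N, forall n, (n >= N)%nat -> lam ^ n < y).
  { intros y Hy. destruct (pow_lt_1_zero lam ltac:(rewrite Rabs_right; lra) y Hy) as [N HN].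
    exists N. intros n Hn. specialize (HN n Hn).
    pose proof (pow_le lam n Hlam0). rewrite Rabs_right in HN; lra. }
  destruct (Hpow (/ (2 * t)) ltac:(apply Rinv_0_lt_compat; lra)) as [N HN].
  set (k := Datatypes.S N).
  assert (Hk : t * lam ^ k <= / 2).
  { specialize (HN k ltac:(unfold k; lia)).
    assert (t * lam ^ k < t * / (2 * t)) by (apply Rmult_lt_compat_l; lra).
    replace (t * / (2 * t)) with (/2) in H by (field; lra). lra. }
  set (D := fun p => rho (u 0%nat) (u p)).
  set (M := sum_f_R0 D k).
  set (B := 2 * t * M).
  assert (HM : forall j, (j <= k)%nat -> D j <= M).
  { intros j Hj. apply sum_ge; auto. intros; apply Hpos. }
  assert (HM0 : 0 <= M) by (eapply Rle_trans; [apply (Hpos (u 0%nat) (u 0%nat))|apply (HM 0%nat); lia]).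
  assert (HB : forall p, D p <= B).
  { intros p. induction p as [p IH] using (well_founded_induction Wf_nat.lt_wf).
    destruct (le_lt_dec p k).
    - pose proof (HM p l). unfold B. nra.
    -
      set (q := (p - k)%nat).
      assert (Hpq : p = (k + q)%nat) by (unfold q; lia).
      pose proof (Hq (u 0%nat) (u k) (u p)) as H1.
      pose proof (Hit k 0%nat q) as H2. rewrite <- Hpq, Nat.add_0_r in H2.
      pose proof (IH q ltac:(unfold q, k in *; lia)) as H3.
      pose proof (HM k (le_n k)) as H4.
      pose proof (pow_le lam k Hlam0).
      unfold D in *.
      assert (rho (u k) (u p) <= lam ^ k * B).
      { eapply Rle_trans; [exact H2|]. apply Rmult_le_compat_l; auto. }
      assert (t * (lam ^ k * B) <= / 2 * B).
      { rewrite <- Rmult_assoc. apply Rmult_le_compat_r; [unfold B; nra|lra]. }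
      unfold B in *. nra. }
  assert (HB0 : 0 <= B) by (unfold B; nra).
  assert (Hnm : forall n m, (n <= m)%nat -> rho (u n) (u m) <= lam ^ n * B).
  { intros n m Hnm. pose proof (Hit n 0%nat (m - n)%nat) as H.
    rewrite Nat.add_0_r in H. replace (n + (m - n))%nat with m in H by lia.
    eapply Rle_trans; [exact H|]. apply Rmult_le_compat_l; [apply pow_le; auto|apply HB]. }
  assert (Hsmall : forall eps, eps > 0 -> exists N, forall n m, (n >= N)%nat -> (m >= N)%nat ->
             rho (u n) (u m) < eps).
  { intros eps Heps.
    destruct (Hpow (eps / (B + 1)) ltac:(apply Rdiv_lt_0_compat; lra)) as [N0 HN0].
    exists N0. intros n m Hn Hm.
    assert (lam ^ n * B < eps).
    { specialize (HN0 n Hn). pose proof (pow_le lam n Hlam0).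
      assert (lam ^ n * (B + 1) < eps) .
      { apply (Rmult_lt_compat_r (B+1)) in HN0; [|lra].
        replace (eps / (B + 1) * (B + 1)) with eps in HN0 by (field; lra). lra. }
      nra. }
    destruct (le_lt_dec n m).
    - pose proof (Hnm n m l). lra.
    - rewrite Hsym. pose proof (Hnm m n ltac:(lia)).
      pose proof (pow_le lam m Hlam0).
      specialize (HN0 m Hm).
      assert (lam ^ m * (B + 1) < eps) .
      { apply (Rmult_lt_compat_r (B+1)) in HN0; [|lra].
        replace (eps / (B + 1) * (B + 1)) with eps in HN0 by (field; lra). lra. }
      nra. }
  assert (Hcau : pb_cauchy rho u).
  { exists 0. intros eps Heps. destruct (Hsmall eps Heps) as [N0 HN0].
    exists N0. intros n m Hn Hm. specialize (HN0 n m Hn Hm).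
    pose proof (Hpos (u n) (u m)). rewrite Rminus_0_r, Rabs_right; lra. }
  destruct (Hcomp u Hcau) as [x [Hdl Hcv]].
  assert (Hxx : rho x x = 0).
  { apply Rle_antisym; [|apply Hpos]. apply le_eps. intros eps Heps.
    destruct (Hdl (eps/2) ltac:(lra)) as [N1 HN1].
    destruct (Hsmall (eps/2) ltac:(lra)) as [N2 HN2].
    specialize (HN1 (max N1 N2) (max N1 N2) ltac:(lia) ltac:(lia)).
    specialize (HN2 (max N1 N2) (max N1 N2) ltac:(lia) ltac:(lia)).
    apply Rabs_def2 in HN1. lra. }
  rewrite Hxx in Hcv.
  assert (HSx : rho (S x) x = 0).
  { apply Rle_antisym; [|apply Hpos]. apply le_eps. intros eps Heps.
    destruct (Hcv (eps / (2 * t)) ltac:(apply Rdiv_lt_0_compat; lra)) as [N1 HN1].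
    pose proof (HN1 N1 ltac:(lia)) as A1. pose proof (HN1 (Datatypes.S N1) ltac:(lia)) as A2.
    unfold R_dist in A1, A2. rewrite Rminus_0_r in A1, A2.
    rewrite Rabs_right in A1 by (apply Rle_ge, Hpos).
    rewrite Rabs_right in A2 by (apply Rle_ge, Hpos).
    pose proof (Hq (S x) (u (Datatypes.S N1)) x) as H1.
    assert (H2 : rho (S x) (u (Datatypes.S N1)) <= lam * rho x (u N1)).
    { unfold u; simpl. apply Hcontr. }
    assert (H0 : rho x (u N1) = rho (u N1) x) by apply Hsym. rewrite H0 in H2.
    assert (Hep : 0 < eps / (2 * t)) by (apply Rdiv_lt_0_compat; lra).
    assert (rho (S x) (u (Datatypes.S N1)) < eps / (2 * t)).
    { pose proof (Hpos (u N1) x). nra. }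
    assert (H3 : t * (rho (S x) (u (Datatypes.S N1)) + rho (u (Datatypes.S N1)) x)
            < t * (eps / (2 * t) + eps / (2 * t))).
    { apply Rmult_lt_compat_l; lra. }
    replace (t * (eps / (2 * t) + eps / (2 * t))) with eps in H3 by (field; lra).
    lra. }
  assert (HSS : rho (S x) (S x) = 0).
  { apply Rle_antisym; [|apply Hpos]. rewrite <- HSx. apply Hdiag. }
  assert (Hfix : S x = x) by (apply Heq; lra).
  exists x. split; [exact Hfix|split; [exact Hxx|]].
  intros c Hc.
  assert (Hcx : rho c x = 0).
  { apply Rle_antisym; [|apply Hpos].
    pose proof (Hcontr c x) as H. rewrite Hc, Hfix in H. pose proof (Hpos c x). nra. }
  assert (Hcc : rho c c = 0) by (apply Rle_antisym; [rewrite <- Hcx; apply Hdiag|apply Hpos]).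
  apply Heq. lra.
Qed.
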